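(* Let $\mathbb{R}^n$ and $\mathbb{R}^m$ be equipped with arbitrary norms $\|\cdot\|$, with dual norms $\|\cdot\|_*$, and let $g:\mathbb{R}^n\to\mathbb{R}^m$, $y\in\mathbb{R}^m$, $\rho>0$, $L\ge 0$, $\mu>0$. Let $B=\{x\in\mathbb{R}^n:\|x\|\le\rho\}$. Assume: (A) $g(0)=0$, $g$ is differentiable in $B$, and $\|g'(x^a)-g'(x^b)\|\le L\|x^a-x^b\|$ for all $x^a,x^b\in B$; (B) for all $x\in B$ and all $h\in\mathbb{R}^m$, $\|g'(x)^T h\|_*\ge \mu\|h\|_*$; (C) $\|y\|<\mu\rho$. Then there exists a solution $x^*$ of $g(x)=y$ with $\|x^*\|\le \frac{\|y\|}{\mu}$.
   Context: For a vector $c$, the dual norm is $\|c\|_*=\sup_{\|x\|=1}(c,x)$. The norm of the matrix $g'(x)$ (a linear map $\mathbb{R}^n\to\mathbb{R}^m$) is the operator norm subordinate to the chosen vector norms on $\mathbb{R}^n$ and $\mathbb{R}^m$. *)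

(* Defs.v *)
From HB Require Import structures.
From mathcomp Require Import all_boot all_order all_algebra.
From mathcomp Require Import all_classical all_reals all_analysis.
Set Implicit Arguments. Unset Strict Implicit. Unset Printing Implicit Defensive.
Import Order.TTheory GRing.Theory Num.Theory.
Import numFieldNormedType.Exports.
Local Open Scope classical_set_scope.
Local Open Scope ring_scope.

Definition is_norm (R : realType) (n : nat) (N : 'rV[R]_n -> R) : Prop :=
  [/\ forall x, 0 <= N x,
      forall x, N x = 0 -> x = 0,
      forall (a : R) x, N (a *: x) = `|a| * N x
    & forall x y, N (x + y) <= N x + N y].

Definition dotv (R : realType) (n : nat) (c x : 'rV[R]_n) : R :=
  \sum_(i < n) c ord0 i * x ord0 i.

Definition dualnorm (R : realType) (n : nat) (N : 'rV[R]_n -> R) (c : 'rV[R]_n) : R :=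
  sup [set dotv c x | x in [set x | N x = 1]].

Definition opnorm (R : realType) (n m : nat) (Nn : 'rV[R]_n -> R)
    (Nm : 'rV[R]_m -> R) (A : 'M[R]_(n, m)) : R :=
  sup [set Nm (x *m A) | x in [set x | Nn x = 1]].

(* Jacobian matrix of g at x, in row-vector convention:
   'd g x v = v *m jac g x *)
Definition jac (R : realType) (n m : nat) (g : 'rV[R]_n -> 'rV[R]_m)
    (x : 'rV[R]_n) : 'M[R]_(n, m) :=
  lin1_mx ('d g x).

(* Main.v *)
Require Import Defs.
From HB Require Import structures.
From mathcomp Require Import all_boot all_order all_algebra.
From mathcomp Require Import all_classical all_reals all_analysis.
From mathcomp Require Import ring lra.
Import Order.TTheory GRing.Theory Num.Theory.
Import numFieldNormedType.Exports.
Local Open Scope classical_set_scope.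
Local Open Scope ring_scope.
Set Warnings "-notation-overridden,-ambiguous-paths,-notation-incompatible-prefix".

Section NormFacts.
Variables (R : realType) (n : nat) (N : 'rV[R]_n -> R).
Hypothesis hN : is_norm N.

Lemma nN_ge0 x : 0 <= N x. Proof. by case: hN. Qed.
Lemma nN_eq0 x : N x = 0 -> x = 0. Proof. by case: hN => _ h _ _; apply: h. Qed.
Lemma nNZ a x : N (a *: x) = `|a| * N x. Proof. by case: hN. Qed.
Lemma nND x y : N (x + y) <= N x + N y. Proof. by case: hN. Qed.
Lemma nN0 : N 0 = 0. Proof. by rewrite -(scale0r (0 : 'rV[R]_n)) nNZ normr0 mul0r. Qed.
Lemma nNN x : N (- x) = N x. Proof. by rewrite -scaleN1r nNZ normrN normr1 mul1r. Qed.
Lemma nNB x y : N x - N y <= N (x - y).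
Proof. rewrite lerBlDr; apply: le_trans (nND _ _); by rewrite subrK. Qed.
Lemma nN_gt0 x : x != 0 -> 0 < N x.
Proof. move=> x0; rewrite lt_neqAle nN_ge0 andbT eq_sym; apply/eqP => /nN_eq0 h; by rewrite h eqxx in x0. Qed.

Lemma coord_le (x : 'rV[R]_n) i : `|x ord0 i| <= `|x|.
Proof.
have -> : `|x| = mx_norm x by []. rewrite mx_normrE; apply/bigmax_geP; right => /=; by exists (ord0, i).
Qed.

Lemma nN_sum (I : Type) (r : seq I) (F : I -> 'rV[R]_n) :
  N (\sum_(i <- r) F i) <= \sum_(i <- r) N (F i).
Proof.
elim/big_ind2 : _ => //; first by rewrite nN0.
move=> a b c d h1 h2; apply: le_trans (nND _ _) _; exact: lerD.
Qed.

Lemma nN_upper : exists2 C, 0 < C & forall x, N x <= C * `|x|.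
Proof.
exists (1 + \sum_(j < n) N 'e_j); first by rewrite ltr_pwDl // sumr_ge0 // => j _; exact: nN_ge0.
move=> x; rewrite {1}(row_sum_delta x); apply: le_trans (nN_sum _ _ _) _.
rewrite mulrDl mul1r big_distrl /=; rewrite -[X in X <= _]add0r; apply: lerD; first exact: normr_ge0.
apply: ler_sum => j _; rewrite nNZ [leRHS]mulrC; apply: ler_wpM2r; first exact: nN_ge0.
exact: coord_le.
Qed.

Lemma nN_cont : continuous N.
Proof.
have [C C0 hC] := nN_upper.
move=> x; apply/(@cvgrPdist_lt _ _ _ (nbhs x) (nbhs_filter x)) => e e0.
have H := @nbhsx_ballx _ _ (x : 'rV[R]_n) _ (divr_gt0 e0 C0).
rewrite -ball_normE /= in H. move: H; apply: filterS => y hy.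
have h1 : `|N x - N y| <= N (x - y).
  rewrite ler_norml nNB andbT lerNl opprB.
  by apply: le_trans (nNB _ _) _; rewrite -opprB nNN.
apply: le_lt_trans h1 _; apply: le_lt_trans (hC _) _.
by rewrite -ltr_pdivlMl // mulrC.
Qed.

Lemma nN_lower : exists2 c, 0 < c & forall x, c * `|x| <= N x.
Proof.
pose S := [set x : 'rV[R]_n | `|x| = 1].
have unit_S x : x != 0 -> S (`|x|^-1 *: x).
  move=> x0; rewrite /S /= normrZ normfV normr_id mulVf //.
  by rewrite normr_eq0.
have Nx_eq x : N x = `|x| * N (`|x|^-1 *: x).
  have [->|x0] := eqVneq x 0; first by rewrite normr0 mul0r nN0.
  by rewrite nNZ normfV normr_id mulrA mulfV ?mul1r // normr_eq0.
case: (pselect (S !=set0)) => [S0|S0]; last first.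
  exists 1 => // x; have [->|x0] := eqVneq x 0; first by rewrite normr0 mulr0 nN0.
  by exfalso; apply: S0; exists (`|x|^-1 *: x); exact: unit_S.
have cS : compact S.
  apply: bounded_closed_compact.
    exists 1; split => //; move=> M M1 x Sx; rewrite /= Sx; exact: ltW.
  have := (continuous_closedP _).1 (@norm_continuous _ 'rV[R]_n) _ (@closed_eq _ 1). exact.
have [x0 /set_mem Sx0 hmin] := EVT_min_rV S0 cS (continuous_subspaceT (A:=S) nN_cont).
exists (N x0).
  apply: nN_gt0; apply/eqP => h; move: Sx0; rewrite /S /= h normr0 => /eqP.
  by rewrite eq_sym oner_eq0.
move=> x; have [->|x0n] := eqVneq x 0; first by rewrite normr0 mulr0 nN0.
rewrite (Nx_eq x) mulrC ler_wpM2l //; apply: hmin; apply/mem_set; exact: unit_S.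
Qed.

Lemma nN_ball_compact r : compact [set x | N x <= r].
Proof.
have [c c0 hc] := nN_lower.
apply: bounded_closed_compact.
  exists (r / c); split; first exact: num_real.
  move=> M hM x /= hx; apply: ltW; apply: le_lt_trans hM.
  by rewrite ler_pdivlMr // mulrC; apply: le_trans (hc _) hx.
exact: ((continuous_closedP _).1 nN_cont _ (@closed_le _ r)).
Qed.

End NormFacts.
Arguments nN_ge0 {R n N}.
Arguments nN_eq0 {R n N}.
Arguments nNZ {R n N}.
Arguments nND {R n N}.
Arguments nN0 {R n N}.
Arguments nNN {R n N}.
Arguments nNB {R n N}.
Arguments nN_gt0 {R n N}.
Arguments nN_sum {R n N}.
Arguments nN_upper {R n N}.
Arguments nN_cont {R n N}.
Arguments nN_lower {R n N}.
Arguments nN_ball_compact {R n N}.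

Section Dot.
Context {R : realType}.

Lemma dotvC n (c x : 'rV[R]_n) : dotv c x = dotv x c.
Proof. by apply: eq_bigr => i _; rewrite mulrC. Qed.

Lemma dotvDr n (c x y : 'rV[R]_n) : dotv c (x + y) = dotv c x + dotv c y.
Proof. by rewrite /dotv -big_split /=; apply: eq_bigr => i _; rewrite mxE mulrDr. Qed.

Lemma dotvZr n (c x : 'rV[R]_n) a : dotv c (a *: x) = a * dotv c x.
Proof. by rewrite /dotv mulr_sumr; apply: eq_bigr => i _; rewrite mxE mulrCA. Qed.

Lemma dotvNr n (c x : 'rV[R]_n) : dotv c (- x) = - dotv c x.
Proof. by rewrite -scaleN1r dotvZr mulN1r. Qed.

Lemma dotvBr n (c x y : 'rV[R]_n) : dotv c (x - y) = dotv c x - dotv c y.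
Proof. by rewrite dotvDr dotvNr. Qed.

Lemma dotv0r n (c : 'rV[R]_n) : dotv c 0 = 0.
Proof. by rewrite /dotv big1 // => i _; rewrite mxE mulr0. Qed.

Lemma dotvDl n (c x y : 'rV[R]_n) : dotv (x + y) c = dotv x c + dotv y c.
Proof. by rewrite dotvC dotvDr !(dotvC _ c). Qed.
Lemma dotvZl n (c x : 'rV[R]_n) a : dotv (a *: x) c = a * dotv x c.
Proof. by rewrite dotvC dotvZr (dotvC _ c). Qed.
Lemma dotvBl n (c x y : 'rV[R]_n) : dotv (x - y) c = dotv x c - dotv y c.
Proof. by rewrite dotvC dotvBr !(dotvC _ c). Qed.

Lemma dotv_expand n (w u : 'rV[R]_n) s :
  dotv (w - s *: u) (w - s *: u) = dotv w w - s * (2 * dotv w u) + s * (s * dotv u u).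
Proof. rewrite dotvBl !dotvBr !dotvZl !dotvZr (dotvC _ u w); ring. Qed.

Lemma dotv_ge0 n (w : 'rV[R]_n) : 0 <= dotv w w.
Proof. by apply: sumr_ge0 => i _; rewrite -expr2 sqr_ge0. Qed.

Lemma dotv_gt0 n (w : 'rV[R]_n) : w != 0 -> 0 < dotv w w.
Proof.
move=> w0; rewrite lt_neqAle dotv_ge0 andbT eq_sym; apply: contra w0 => /eqP h.
apply/eqP/rowP => i; rewrite mxE; apply/eqP.
have : 0 <= w ord0 i * w ord0 i <= 0.
  rewrite -expr2 sqr_ge0 /= -h /dotv (bigD1 i) //= lerDl.
  by apply: sumr_ge0 => j _; rewrite -expr2 sqr_ge0.
by rewrite -eq_le eq_sym mulf_eq0 orbb.
Qed.

Lemma dotv_mulmx n m (h : 'rV[R]_m) (d : 'rV[R]_n) (J : 'M[R]_(n, m)) :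
  dotv h (d *m J) = dotv (h *m J^T) d.
Proof.
rewrite /dotv; under eq_bigr do rewrite mxE big_distrr /=.
rewrite exchange_big /=; apply: eq_bigr => i _; rewrite mxE big_distrl /=.
by apply: eq_bigr => j _; rewrite mxE [d _ _ * _]mulrC mulrA.
Qed.

Lemma dotv_bound n (c x : 'rV[R]_n) : `|dotv c x| <= (\sum_i `|c ord0 i|) * `|x|.
Proof.
rewrite big_distrl /=; apply: le_trans (ler_norm_sum _ _ _) _.
apply: ler_sum => i _; rewrite normrM ler_wpM2l //; exact: coord_le.
Qed.

End Dot.

Section Dual.
Variables (R : realType) (n : nat) (N : 'rV[R]_n -> R).
Hypothesis hN : is_norm N.

Lemma dual_ub c : ubound [set dotv c x | x in [set x | N x = 1]]
   ((\sum_i `|c ord0 i|) / (projT1 (cid2 (nN_lower hN)))).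
Proof.
case: cid2 => k k0 hk /=.
move=> _ [x /= Nx1 <-]; apply: (le_trans (ler_norm (dotv c x))).
apply: (le_trans (dotv_bound _ c x)).
rewrite ler_pdivlMr // -mulrA; apply: ler_piMr; first by apply: sumr_ge0 => i _.
by rewrite mulrC -Nx1 hk.
Qed.

Lemma dual_le c x : dotv c x <= dualnorm N c * N x.
Proof.
have [->|x0] := eqVneq x 0; first by rewrite dotv0r nN0 // mulr0.
have Nx0 := nN_gt0 hN _ x0.
have Su : [set x | N x = 1] ((N x)^-1 *: x).
  by rewrite /= nNZ // normfV gtr0_norm // mulVf // gt_eqF.
have hs : has_sup [set dotv c x | x in [set x | N x = 1]].
  split; first by exists (dotv c ((N x)^-1 *: x)), ((N x)^-1 *: x).
  by eexists; exact: dual_ub.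
have := sup_upper_bound hs (ex_intro2 _ _ _ Su erefl).
by rewrite dotvZr mulrC ler_pdivrMr.
Qed.

Lemma dual_approx c e : 0 < e -> exists d, N d <= 1 /\ dualnorm N c - e < dotv c d.
Proof.
move=> e0.
case: (pselect ([set dotv c x | x in [set x | N x = 1]] !=set0)) => [ne|emp].
  have hs : has_sup [set dotv c x | x in [set x | N x = 1]].
    by split => //; eexists; exact: dual_ub.
  have [_ [d /= Nd <-] hd] := sup_adherent e0 hs.
  by exists d; rewrite Nd.
exists 0; rewrite nN0 // ler01 dotv0r /dualnorm; split => //.
have -> : [set dotv c x | x in [set x | N x = 1]] = set0.
  by apply/seteqP; split => // z hz; apply: emp; exists z.
by rewrite sup0 subr_lt0.
Qed.

End Dual.
Arguments dual_ub {R n N}.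
Arguments dual_le {R n N}.
Arguments dual_approx {R n N}.

Lemma phi_cont (R : realType) n m (z : 'rV[R]_m) (J : 'M[R]_(n, m)) :
  continuous (fun d : 'rV[R]_n => dotv (z - d *m J) (z - d *m J)).
Proof.
have hc i : continuous (fun d : 'rV[R]_n => (z - d *m J) ord0 i).
  have -> : (fun d : 'rV[R]_n => (z - d *m J) ord0 i) =
            (fun d => z ord0 i - \sum_k d ord0 k * J k i).
    by apply: funext => d; rewrite !mxE.
  have H : continuous (fun d : 'rV[R]_n => \sum_k d ord0 k * J k i).
    have := @continuous_big R 'I_n +%R 0 xpredT add_continuous 'rV[R]_n
       (index_enum _) (fun k d => d ord0 k * J k i).
    apply => k _ y. apply: cvgM. exact: (@nbhs_filter _ y). move: (@coord_continuous R 1 n ord0 k y); apply. exact: (@cvg_cst _ _ _ _ (@nbhs_filter _ y)).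
  move=> x; exact: (cvgB (cvg_cst _) (H x)).
have := @continuous_big R 'I_m +%R 0 xpredT add_continuous 'rV[R]_n
   (index_enum _) (fun i d => (z - d *m J) ord0 i * (z - d *m J) ord0 i).
apply => // i _ x.
exact: (cvgM (hc i x) (hc i x)).
Qed.

Lemma surj (R : realType) n m (Nn : 'rV[R]_n -> R) (Nm : 'rV[R]_m -> R)
  (hNn : is_norm Nn) (hNm : is_norm Nm) (J : 'M[R]_(n, m)) (mu : R) (mu0 : 0 < mu)
  (hB : forall h, mu * dualnorm Nm h <= dualnorm Nn (h *m J^T)) (z : 'rV[R]_m) :
  exists d, d *m J = z /\ mu * Nn d <= Nm z.
Proof.
have [->|z0] := eqVneq z 0.
  by exists 0; rewrite mul0mx (nN0 hNn) (nN0 hNm) mulr0.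
have Nz0 : 0 < Nm z := nN_gt0 hNm _ z0.
pose r := Nm z / mu.
have r0 : 0 < r by rewrite divr_gt0.
pose K := [set d : 'rV[R]_n | Nn d <= r].
pose phi := fun d : 'rV[R]_n => dotv (z - d *m J) (z - d *m J).
have K0 : K !=set0 by exists 0; rewrite /K /= (nN0 hNn) ltW.
have [d0 /set_mem Kd0 hmin] := EVT_min_rV K0 (nN_ball_compact hNn r)
  (continuous_subspaceT (A:=K) (@phi_cont _ _ _ z J)).
pose w := z - d0 *m J.
have [w0|wn0] := eqVneq w 0.
  exists d0; split; first by move/eqP: w0; rewrite subr_eq0 => /eqP <-.
  by move: Kd0; rewrite /K /= /r ler_pdivlMr // mulrC.
have var : forall d, Nn d <= r -> dotv w (d *m J) <= dotv w (d0 *m J).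
  move=> d Kd.
  pose u := (d - d0) *m J.
  pose a := dotv w u.
  pose b := dotv u u.
  have b0 : 0 <= b by exact: dotv_ge0.
  have key : forall s, 0 < s -> s <= 1 -> 2 * a <= s * b.
    move=> s s0 s1.
    have Ks : Nn (d0 + s *: (d - d0)) <= r.
      have -> : d0 + s *: (d - d0) = (1 - s) *: d0 + s *: d.
        by rewrite scalerBr scalerBl scale1r addrA addrAC.
      apply: le_trans (nND hNn _ _) _.
      rewrite !(nNZ hNn) (ger0_norm (ltW s0)) ger0_norm ?subr_ge0 //.
      apply: (@le_trans _ _ ((1 - s) * r + s * r)).
        apply: lerD; apply: ler_wpM2l => //; first by rewrite subr_ge0.
        exact: ltW.
      by rewrite -mulrDl subrK mul1r.
    have : dotv w w <= dotv (w - s *: u) (w - s *: u).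
      have := hmin _ (mem_set Ks).
      by rewrite /phi /w /u mulmxDl -scalemxAl opprD addrA.
    have -> : dotv (w - s *: u) (w - s *: u) = dotv w w - s * (2 * a) + s * (s * b).
      by rewrite dotv_expand.
    move=> h.
    have h2 : s * (2 * a) <= s * (s * b).
      by rewrite -subr_ge0; move: h; rewrite -subr_ge0; congr (0 <= _); ring.
    by rewrite ler_pM2l in h2.
  have a0 : a <= 0.
    rewrite leNgt; apply/negP => apos.
    have ab0 : 0 < a + b by lra.
    have s1 : a / (a + b) <= 1 by rewrite ler_pdivrMr // mul1r lerDl.
    have := key _ (divr_gt0 apos ab0) s1.
    rewrite mulrAC ler_pdivlMr // => h.
    nra.
  by move: a0; rewrite /a /u mulmxBl dotvBr subr_le0.
exfalso.
have ww0 : 0 < dotv w w := @dotv_gt0 _ _ w wn0.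
have [d1 [Nd1 hd1]] := dual_approx hNn (w *m J^T) _ (divr_gt0 ww0 r0).
have Kd1 : Nn (r *: d1) <= r.
  by rewrite (nNZ hNn) gtr0_norm // ler_piMr // ltW.
have := var _ Kd1.
rewrite -scalemxAl dotvZr dotv_mulmx.
have -> : d0 *m J = z - w by rewrite /w opprB addrC subrK.
rewrite dotvBr.
have hz := dual_le hNm w z.
have hBw := hB w.
move=> hv.
have h1 : r * dualnorm Nn (w *m J^T) - dotv w w < r * dotv (w *m J^T) d1.
  have := hd1; rewrite -(ltr_pM2l r0) mulrBr mulrCA mulfV ?gt_eqF // mulr1.
  by [].
have h2 : Nm z * dualnorm Nm w <= r * dualnorm Nn (w *m J^T).
  have -> : Nm z = r * mu by rewrite /r mulfVK ?gt_eqF.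
  by rewrite -mulrA ler_wpM2l // ltW.
have h3 : dotv w z <= Nm z * dualnorm Nm w by rewrite mulrC.
lra.
Qed.

Lemma stepA (R : realType) n m (Nn : 'rV[R]_n -> R) (Nm : 'rV[R]_m -> R)
  (g : 'rV[R]_n -> 'rV[R]_m) (y : 'rV[R]_m) (rho mu c : R) :
  is_norm Nn -> is_norm Nm -> 0 < rho -> 0 < mu ->
  g 0 = 0 ->
  (forall x, Nn x <= rho -> differentiable g x) ->
  (forall x (h : 'rV[R]_m), Nn x <= rho ->
     mu * dualnorm Nm h <= dualnorm Nn (h *m (jac g x)^T)) ->
  0 < c -> Nm y < c * rho -> c < mu ->
  exists x, g x = y /\ Nn x <= rho /\ c * Nn x <= Nm y.
Proof.
move=> hNn hNm rho0 mu0 g0 hdiff hB c0 hc1 hc2.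
pose Bs := [set x : 'rV[R]_n | Nn x <= rho].
pose F := fun x => Nm (g x - y) + c * Nn x.
have Fc : {within Bs, continuous F}.
  apply: continuous_in_subspaceT => x /set_mem hx.
  have gc := differentiable_continuous (hdiff x hx).
  have h1 : (fun x' => g x' - y) @ x --> g x - y.
    exact: (cvgB gc (cvg_cst _)).
  have h2 : (fun x' => Nm (g x' - y)) @ x --> Nm (g x - y).
    exact: (cvg_comp _ _ h1 (nN_cont hNm _)).
  apply: cvgD; first exact: (@nbhs_filter _ x).
    exact: h2.
  apply: cvgM; first exact: (@nbhs_filter _ x).
    exact: (@cvg_cst _ _ _ _ (@nbhs_filter _ x)).
  exact: nN_cont.
have B0 : Bs !=set0 by exists 0; rewrite /Bs /= (nN0 hNn) ltW.
have [xb /set_mem Bxb hmin] := EVT_min_rV B0 (nN_ball_compact hNn rho) Fc.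
have hF0 : F xb <= Nm y.
  have := hmin 0 (mem_set _); rewrite /F g0 sub0r (nNN hNm) (nN0 hNn) mulr0 addr0.
  by apply; rewrite /Bs /= (nN0 hNn) ltW.
have Nz_ge0 := nN_ge0 hNm (g xb - y).
have cxb : c * Nn xb <= Nm y by move: hF0; rewrite /F; lra.
have xbrho : Nn xb < rho.
  by rewrite -(ltr_pM2l c0); exact: le_lt_trans cxb hc1.
exists xb; split; last by split.
apply/eqP; rewrite -subr_eq0; apply/negP => /negP z0.
pose z := g xb - y.
have Nz0 : 0 < Nm z := nN_gt0 hNm _ z0.
have [d [hdJ hdN]] := @surj _ _ _ _ _ hNn hNm _ _ mu0 (fun h => hB xb h Bxb) (- z).
rewrite (nNN hNm) in hdN.
have dgd : 'd g xb d = - z by rewrite -hdJ /jac mul_rV_lin1.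
have hder := diff_derivable (v:=d) (hdiff xb Bxb).
have hc : (fun h : R => h^-1 *: ((g \o shift xb) (h *: d) - g xb)) @ 0^' --> - z.
  by rewrite -dgd -deriveE; [exact: hder | exact: hdiff xb Bxb].
have [Cm Cm0 hCm] := nN_upper hNm.
pose del := (mu - c) * Nm z / mu.
have del0 : 0 < del by rewrite /del divr_gt0 // mulr_gt0 // subr_gt0.
have := @cvgr_dist_lt _ _ _ _ (dnbhs_filter (0:R)) _ _ hc _ (divr_gt0 del0 Cm0).
move=> /nbhs_ballP [del' del'0 hball].
pose t0 := (rho - Nn xb) / (Nn d + 1).
have Nd0 := nN_ge0 hNn d.
have t00 : 0 < t0 by rewrite divr_gt0 ?subr_gt0 //; lra.
pose t := Num.min (del' / 2) (Num.min 1 t0).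
have t0p : 0 < t by rewrite /t !lt_min divr_gt0 //= ltr01.
have t1 : t <= 1 by rewrite /t !ge_min lexx orbT.
have tt0 : t <= t0 by rewrite /t !ge_min lexx !orbT.
have tdel : t < del'.
  have h : t <= del' / 2 by rewrite /t ge_min lexx.
  apply: le_lt_trans h _; by rewrite ltr_pdivrMr // ltr_pMr // ltr1n.
have := hball t.
rewrite -ball_normE /ball_ /= sub0r normrN gtr0_norm // => /(_ tdel (lt0r_neq0 t0p)).
rewrite /shift /=.
pose e := t^-1 *: (g (t *: d + xb) - g xb) + z.
have -> : - z - t^-1 *: (g (t *: d + xb) - g xb) = - e by rewrite /e [RHS]opprD addrC.
rewrite normrN => he.
have Ne : Nm e < del.
  apply: le_lt_trans (hCm e) _.
  by rewrite mulrC -ltr_pdivlMr.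
pose xt := xb + t *: d.
have Nxt : Nn xt <= Nn xb + t * Nn d.
  by apply: le_trans (nND hNn _ _) _; rewrite (nNZ hNn) gtr0_norm.
have Bxt : Nn xt <= rho.
  apply: le_trans Nxt _.
  have : t * (Nn d + 1) <= rho - Nn xb.
    by rewrite -ler_pdivlMr //; lra.
  nra.
have hm := hmin xt (mem_set Bxt).
have geq : g xt - y = (1 - t) *: z + t *: e.
  have tX : t *: e = (g (t *: d + xb) - g xb) + t *: z.
    by rewrite /e scalerDr scalerA mulfV ?lt0r_neq0 // scale1r.
  rewrite tX scalerBl scale1r /xt [xb + _]addrC.
  move: (g (t *: d + xb)) (t *: z) => G tz.
  rewrite /z [_ - _ + tz]addrC addrA subrK addrC addrA subrK.
  by [].
have Ng : Nm (g xt - y) <= (1 - t) * Nm z + t * Nm e.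
  rewrite geq; apply: le_trans (nND hNm _ _) _.
  rewrite !(nNZ hNm) ger0_norm ?subr_ge0 // gtr0_norm //.
move: hm; rewrite /F -/z.
move=> hm.
have h1 : t * Nm z <= t * (Nm e + c * Nn d) by nra.
have h2 : Nm z <= Nm e + c * Nn d by rewrite -(ler_pM2l t0p).
have h3 : mu * Nm e < (mu - c) * Nm z.
  by move: Ne; rewrite /del -ltr_pdivlMl // mulrC.
nra.
Qed.

Theorem theorem1 (R : realType) (n m : nat)
    (Nn : 'rV[R]_n -> R) (Nm : 'rV[R]_m -> R)
    (g : 'rV[R]_n -> 'rV[R]_m) (y : 'rV[R]_m) (rho L mu : R) :
  is_norm Nn -> is_norm Nm ->
  0 < rho -> 0 <= L -> 0 < mu ->
  (* (A) *)
  g 0 = 0 ->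
  (forall x, Nn x <= rho -> differentiable g x) ->
  (forall xa xb, Nn xa <= rho -> Nn xb <= rho ->
     opnorm Nn Nm (jac g xa - jac g xb) <= L * Nn (xa - xb)) ->
  (* (B): || g'(x)^T h ||_* >= mu ||h||_*, with g'(x)^T h = h *m (jac g x)^T *)
  (forall x (h : 'rV[R]_m), Nn x <= rho ->
     mu * dualnorm Nm h <= dualnorm Nn (h *m (jac g x)^T)) ->
  (* (C) *)
  Nm y < mu * rho ->
  exists xs : 'rV[R]_n, g xs = y /\ Nn xs <= Nm y / mu.
Proof.
move=> hNn hNm rho0 L0 mu0 g0 hdiff _ hB hy.
pose Bs := [set x : 'rV[R]_n | Nn x <= rho].
pose a := fun x => mu * Nn x - Nm y.
pose Psi := fun x => Nm (g x - y) + (a x + `|a x|).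
have Psic : {within Bs, continuous Psi}.
  apply: continuous_in_subspaceT => x /set_mem hx.
  have gc := differentiable_continuous (hdiff x hx).
  have h1 : (fun x' => g x' - y) @ x --> g x - y.
    exact: (cvgB gc (cvg_cst _)).
  have h2 : (fun x' => Nm (g x' - y)) @ x --> Nm (g x - y).
    exact: (cvg_comp _ _ h1 (nN_cont hNm _)).
  have h3 : a @ x --> a x.
    apply: cvgB; first exact: (@nbhs_filter _ x).
      apply: cvgM; first exact: (@nbhs_filter _ x).
        exact: (@cvg_cst _ _ _ _ (@nbhs_filter _ x)).
      exact: nN_cont.
    exact: (@cvg_cst _ _ _ _ (@nbhs_filter _ x)).
  have h4 : (fun x' => `|a x'|) @ x --> `|a x|.
    exact: (cvg_comp _ _ h3 (@norm_continuous _ R^o _)).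
  apply: cvgD; first exact: (@nbhs_filter _ x).
    exact: h2.
  apply: cvgD; first exact: (@nbhs_filter _ x).
    exact: h3.
  exact: h4.
have B0 : Bs !=set0 by exists 0; rewrite /Bs /= (nN0 hNn) ltW.
have [xs /set_mem Bxs hmin] := EVT_min_rV B0 (nN_ball_compact hNn rho) Psic.
have aa0 : forall u : R, 0 <= u + `|u|.
  by move=> u; have [u0|u0] := leP 0 u; [rewrite ger0_norm //; lra | rewrite ltr0_norm //; lra].
have Nyge0 := nN_ge0 hNm y.
have Psi0 : Psi xs <= 0.
  rewrite leNgt; apply/negP => P0.
  pose c0 := (Nm y / rho + mu) / 2.
  have hyr : Nm y / rho < mu by rewrite ltr_pdivrMr.
  have c00 : 0 < c0.
    by rewrite /c0 divr_gt0 // ltr_wpDl // divr_ge0 // ltW.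
  pose c := Num.max c0 (mu - Psi xs / (4 * rho)).
  have cc0 : c0 <= c by rewrite /c le_max lexx.
  have cc1 : mu - Psi xs / (4 * rho) <= c by rewrite /c le_max lexx orbT.
  have cmu : c < mu.
    rewrite /c gt_max; apply/andP; split; first by rewrite /c0; lra.
    by rewrite ltrBlDr ltrDl divr_gt0 // mulr_gt0.
  have c_pos : 0 < c by apply: lt_le_trans cc0.
  have hyc : Nm y < c * rho.
    rewrite -ltr_pdivrMr //; apply: lt_le_trans cc0; rewrite /c0; lra.
  have [x [gx [Bx cx]]] := @stepA _ _ _ _ _ _ _ _ _ _ hNn hNm rho0 mu0 g0 hdiff hB c_pos hyc cmu.
  have := hmin x (mem_set Bx).
  rewrite /Psi gx subrr (nN0 hNm) add0r.
  have ha : a x <= Psi xs / 4.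
    have e1 : (mu - c) * Nn x <= Psi xs / (4 * rho) * rho.
      apply: le_trans (_ : (mu - c) * Nn x <= Psi xs / (4 * rho) * Nn x) _.
        by apply: ler_wpM2r; [exact: nN_ge0 | lra].
      by apply: ler_wpM2l => //; apply: ltW; rewrite divr_gt0 // mulr_gt0.
    have e2 : Psi xs / (4 * rho) * rho = Psi xs / 4.
      by field; rewrite ?lt0r_neq0.
    rewrite /a; lra.
  move=> hh; have hh' : Psi xs <= a x + `|a x| := hh.
  have [ax0|ax0] := leP 0 (a x); move: hh'; [rewrite ger0_norm // | rewrite ltr0_norm //]; lra.
have hPs := aa0 (a xs).
have hNg := nN_ge0 hNm (g xs - y).
have e3 : Nm (g xs - y) = 0 by move: Psi0; rewrite /Psi; lra.
exists xs; split.
  by apply/eqP; rewrite -subr_eq0; apply/eqP; exact: (nN_eq0 hNm).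
have : a xs <= 0.
  move: Psi0; rewrite /Psi e3 add0r.
  by have [ax0|ax0] := leP 0 (a xs); [rewrite ger0_norm // | rewrite ltr0_norm //]; lra.
by rewrite /a subr_le0 ler_pdivlMr // mulrC.
Qed.
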